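(* Let $H$ be a finite group of odd order. Then \[ \mathsf{GEN}(H)=\begin{cases} *0, & \text{if } |H|=1,\\ *2, & \text{if } |H|>1 \text{ and } d(H)\in\{1,2\},\\ *1, & \text{otherwise.}\end{cases} \]
   Context: For a finite group $G$, $\mathsf{GEN}(G)$ is the following impartial two-player game. A position is a set of elements selected so far; the starting position is $\emptyset$. From a position $P$ with $\langle P\rangle\neq G$, the player to move selects some $g\in G\setminus P$, producing the position $P\cup\{g\}$ (these are the options of $P$); a position $P$ with $\langle P\rangle = G$ has no options. The nim-number of a position is defined recursively by $\operatorname{nim}(P)=\operatorname{mex}\{\operatorname{nim}(Q): Q \text{ an option of } P\}$, where $\operatorname{mex}(A)$ is the least nonnegative integer not in $A$. We write $\mathsf{GEN}(G)=*n$ if $\operatorname{nim}(\emptyset)=n$. $d(G)$ denotes the minimum size of a generating set of $G$. *)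

(* Defs.v *)
From HB Require Import structures.
From mathcomp Require Import all_boot all_order all_fingroup.
Set Implicit Arguments. Unset Strict Implicit. Unset Printing Implicit Defensive.
Local Open Scope group_scope.

(* mex s = least natural number not occurring in s (it is <= size s). *)
Definition mex (s : seq nat) : nat :=
  find (fun n => n \notin s) (iota 0 (size s).+1).

Definition gen_options (gT : finGroupType) (G P : {set gT}) : seq {set gT} :=
  if <<P>> == G then [::] else [seq g |: P | g <- enum (G :\: P)].

(* nim-number computed with fuel n; each move increases |P| (P a subset of G),
   so fuel #|G|.+1 suffices from the empty position. *)
Fixpoint nim_fuel (gT : finGroupType) (G : {set gT}) (n : nat) (P : {set gT}) : nat :=
  match n with
  | 0 => 0
  | n'.+1 => mex [seq nim_fuel G n' Q | Q <- gen_options G P]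
  end.

Definition nim (gT : finGroupType) (G P : {set gT}) : nat := nim_fuel G #|G|.+1 P.

Definition gen_nim (gT : finGroupType) (G : {set gT}) : nat := nim G set0.

Definition dgen (gT : finGroupType) (G : {set gT}) : nat :=
  \big[minn/#|G|]_(A : {set gT} | (A \subset G) && (<<A>> == G)) #|A|.

(* Main.v *)
Require Import Defs.
From HB Require Import structures.
From mathcomp Require Import all_boot all_order all_fingroup.
Set Implicit Arguments. Unset Strict Implicit. Unset Printing Implicit Defensive.

Lemma mex_eq s n : (forall k, k < n -> k \in s) -> n \notin s -> mex s = n.
Proof.
move=> hk hn.
rewrite /mex.
have sz: n <= size s.
  rewrite -(size_iota 0 n); apply: uniq_leq_size; first exact: iota_uniq.
  by move=> x; rewrite mem_iota add0n => /andP[_]; apply: hk.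
set p := (fun n0 => n0 \notin s).
have hin: n \in iota 0 (size s).+1 by rewrite mem_iota add0n ltnS sz.
have hh : has p (iota 0 (size s).+1) by apply/hasP; exists n.
have lt := hh; rewrite has_find size_iota in lt.
have := nth_find 0 hh; rewrite nth_iota // add0n /p => pf.
apply/eqP; rewrite eqn_leq; apply/andP; split.
- rewrite leqNgt; apply/negP => /(before_find 0).
  rewrite nth_iota; last by rewrite ltnS.
  by rewrite add0n /p hn.
- rewrite leqNgt; apply/negP => lt'.
  by move: (hk _ lt'); rewrite (negbTE pf).
Qed.

Section Gen.
Local Open Scope group_scope.
Variables (gT : finGroupType) (H : {group gT}).
Hypothesis oddH : odd #|H|.
Local Notation G := (H : {set gT}).

Definition near (P : {set gT}) := [exists g in G, <<g |: P>> == G].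
Definition fval P := if <<P>> == G then 0%N else if near P then (if odd #|P| then 1%N else 2%N)
  else if odd #|P| then 0%N else if [exists g in G :\: P, near (g |: P)] then 2%N else 1%N.

Lemma gen_add (A : {set gT}) g : g \in <<A>> -> <<g |: A>> = <<A>>.
Proof.
move=> gA; apply/eqP; rewrite eqEsubset (genS (subsetUr _ _)) andbT.
by rewrite gen_subG subUset sub1set gA subset_gen.
Qed.

Lemma near_mono (P Q : {set gT}) : Q \subset G -> P \subset Q -> near P -> near Q.
Proof.
move=> QG PQ /existsP[h /andP[hG /eqP e]]; apply/existsP; exists h.
rewrite hG /= eqEsubset gen_subG subUset sub1set hG QG /=.
by rewrite -{1}e genS // setUS.
Qed.

Lemma near_add (P : {set gT}) g : g \in <<P>> -> near (g |: P) = near P.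
Proof.
move=> gP; apply/existsP/existsP => -[h /andP[hG e]]; exists h; rewrite hG /=.
- rewrite setUCA gen_add in e => //.
  by apply: (subsetP (genS (subsetUr [set h] P))).
- rewrite setUCA gen_add //.
  by apply: (subsetP (genS (subsetUr [set h] P))).
Qed.

Lemma odd_gen (P : {set gT}) : P \subset G -> odd #|<<P>>|.
Proof.
move=> PG; apply: (dvdn_odd _ oddH); apply: cardSg; by rewrite gen_subG.
Qed.

Lemma exists_in (P : {set gT}) : P \subset G -> ~~ odd #|P| -> exists2 g, g \in <<P>> & g \notin P.
Proof.
move=> PG ev.
have: P \proper <<P>>.
  rewrite properEneq subset_gen andbT; apply/eqP => e.
  by move: ev; rewrite {1}e odd_gen.
by case/properP => _ [g g1 g2]; exists g.
Qed.

Lemma memL x (P : {set gT}) : <<P>> != G ->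
  (x \in [seq fval Q | Q <- gen_options G P]) = [exists g in G :\: P, fval (g |: P) == x].
Proof.
move=> nt; rewrite /gen_options (negbTE nt) -map_comp.
apply/mapP/existsP => [[g gin ->]|[g /andP[gin /eqP <-]]].
  by exists g; rewrite -mem_enum gin eqxx.
by exists g; rewrite ?mem_enum.
Qed.

Lemma fval_opt (P : {set gT}) g : g \in G :\: P ->
  fval (g |: P) = if <<g |: P>> == G then 0%N else if near (g |: P) then
     (if odd #|P| then 2%N else 1%N) else if odd #|P| then
     (if [exists h in G :\: (g |: P), near (h |: (g |: P))] then 2%N else 1%N) else 0%N.
Proof.
case/setDP => _ gP; rewrite /fval cardsU1 gP /=.
by case: (odd #|P|).
Qed.

Lemma nim_fuelE n (P : {set gT}) : P \subset G -> #|G :\: P| < n -> nim_fuel G n P = fval P.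
Proof.
elim: n P => [//|n IH] P PG lt /=.
have opt : forall g, g \in G :\: P -> (g |: P \subset G) /\ #|G :\: (g |: P)| < n.
  move=> g gin; move/setDP: (gin) => [gG gP]; split; first by rewrite subUset sub1set gG.
  rewrite -ltnS (leq_trans _ lt) // ltnS; apply: proper_card; apply/properP; split.
    by apply: setDS; apply: subsetUr.
  by exists g => //; rewrite !inE eqxx.
have -> : [seq nim_fuel G n Q | Q <- gen_options G P] = [seq fval Q | Q <- gen_options G P].
  apply/eq_in_map => Q; rewrite /gen_options; case: ifP => // _.
  case/mapP => g; rewrite mem_enum => gin ->.
  by case: (opt g gin) => a b; apply: IH.
case: (boolP (<<P>> == G)) => [e|nt].
  by rewrite /gen_options /fval e.
have optnt : forall g, g \in G :\: P -> near P = false -> <<g |: P>> == G = false.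
  move=> g /setDP[gG _] nf; apply/negbTE/negP => e.
  have : near P by apply/existsP; exists g; rewrite gG.
  by rewrite nf.
have nearopt : forall g, g \in G :\: P -> near P -> near (g |: P).
  by move=> g gin np; apply: (near_mono _ _ np) => //; [case: (opt g gin)|apply: subsetUr].
rewrite /fval (negbTE nt).
case: (boolP (near P)) => np.
  have [h hin eh] : exists2 h, h \in G :\: P & <<h |: P>> == G.
    case/existsP: (np) => h /andP[hG eh]; exists h => //.
    rewrite inE hG andbT; apply/negP => hP.
    by move: eh; rewrite gen_add ?(negbTE nt) // (subsetP (subset_gen P)).
  case: (boolP (odd #|P|)) => op.
    apply: mex_eq => [k|]; first by rewrite ltnS leqn0 => /eqP->; rewrite memL //; apply/existsP; exists h; rewrite hin fval_opt // eh.
    rewrite memL //; apply/existsP => -[g /andP[gin]]; rewrite fval_opt // nearopt // op.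
    by case: ifP.
  apply: mex_eq => [k|].
    rewrite ltnS leq_eqVlt ltnS leqn0 => /orP[]/eqP->; rewrite memL //; apply/existsP.
      have [g gK gP] := exists_in PG op.
      have gin : g \in G :\: P by rewrite inE gP (subsetP _ _ gK) // gen_subG.
      exists g; rewrite gin fval_opt // gen_add // (negbTE nt) nearopt // (negbTE op) //.
    by exists h; rewrite hin fval_opt // eh.
  rewrite memL //; apply/existsP => -[g /andP[gin]]; rewrite fval_opt // nearopt // (negbTE op).
  by case: ifP.
case: (boolP (odd #|P|)) => op.
  apply: mex_eq => // ; rewrite memL //; apply/existsP => -[g /andP[gin]].
  rewrite fval_opt // optnt // ?(negbTE np) // op.
  by case: ifP => // _; case: ifP.
have [g0 gK gP] := exists_in PG op.
have g0in : g0 \in G :\: P by rewrite inE gP (subsetP _ _ gK) // gen_subG.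
have zin : 0%N \in [seq fval Q | Q <- gen_options G P].
  rewrite memL //; apply/existsP; exists g0; rewrite g0in fval_opt // optnt // ?(negbTE np) //.
  by rewrite near_add // (negbTE np) (negbTE op).
case: (boolP [exists g in G :\: P, near (g |: P)]) => [/existsP[g /andP[gin ng]]|nn].
  apply: mex_eq => [k|].
    rewrite ltnS leq_eqVlt ltnS leqn0 => /orP[]/eqP-> //.
    rewrite memL //; apply/existsP; exists g; rewrite gin fval_opt // optnt ?(negbTE np) //.
    by rewrite ng (negbTE op).
  rewrite memL //; apply/existsP => -[g' /andP[gin']]; rewrite fval_opt // optnt ?(negbTE np) //.
  by rewrite (negbTE op); case: ifP.
apply: mex_eq => [k|].
  by rewrite ltnS leqn0 => /eqP->.
rewrite memL //; apply/existsP => -[g' /andP[gin']]; rewrite fval_opt // optnt ?(negbTE np) //.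
rewrite (negbTE op); case: ifP => // ng.
by move/existsP: nn; case; exists g'; rewrite gin' ng.
Qed.

End Gen.

Lemma bigmin_le (I : eqType) (r : seq I) (P : pred I) (F : I -> nat) x a :
  a \in r -> P a -> \big[minn/x]_(i <- r | P i) F i <= F a.
Proof.
elim: r => // b r IH; rewrite inE big_cons => /orP[/eqP-> ->|ar Pa].
  exact: geq_minl.
case: ifP => _; last exact: IH.
by rewrite geq_min IH ?orbT.
Qed.

Lemma dgen_le2 (gT : finGroupType) (H : {group gT}) : #|H| != 1 -> odd #|H| ->
  ((dgen H == 1) || (dgen H == 2)) =
  [exists g in H, exists h in H, <<h |: [set g]>>%g == H].
Proof.
move=> n1 oddH.
have H2 : 2 < #|H|.
  move: n1 oddH (cardG_gt0 H); case: #|H| => [|[|[|]]] //.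
have gen_nonempty : forall A : {set gT}, <<A>>%g == H -> 0 < #|A|.
  move=> A e; rewrite card_gt0; apply/negP => /eqP A0; move: e n1.
  by rewrite A0 gen0 eq_sym trivg_card1 => ->.
have d0 : 0 < dgen H.
  rewrite /dgen; apply: (big_ind (fun x => 0 < x)) => [|x y|A /andP[_ e]].
  - exact: cardG_gt0.
  - by move=> a b; rewrite leq_min a b.
  - exact: gen_nonempty.
have -> : (dgen H == 1) || (dgen H == 2) = (dgen H <= 2).
  by move: d0; case: (dgen H) => [|[|[|]]].
apply/idP/idP.
  apply: contraLR => nex; rewrite -ltnNge /dgen.
  apply: (big_ind (fun x => 2 < x)) => [//|x y a b|A /andP[AH e]].
    by rewrite leq_min a b.
  rewrite ltnNge; apply/negP => le2.
  move/negP: nex; apply.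
  have : (#|A| == 2) || (#|A| == 1).
    by move: le2 (gen_nonempty _ e); case: #|A| => [|[|[|]]].
  case/orP=> [/cards2P[x [y [_ Ae]]]|/cards1P[x Ae]].
    apply/existsP; exists y; apply/andP; split.
      by rewrite (subsetP AH) // Ae !inE eqxx orbT.
    apply/existsP; exists x; rewrite (subsetP AH) ?Ae ?inE ?eqxx //=.
    by rewrite -Ae.
  apply/existsP; exists x; apply/andP; split.
    by rewrite (subsetP AH) // Ae !inE eqxx.
  apply/existsP; exists x; rewrite (subsetP AH) ?Ae ?inE ?eqxx //=.
  by rewrite setUid -Ae.
case/existsP => g /andP[gH /existsP[h /andP[hH e]]].
rewrite /dgen; apply: leq_trans; first apply: (bigmin_le _ _ (mem_index_enum (h |: [set g]))).
  by rewrite subUset !sub1set hH gH e.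
by rewrite cardsU1 cards1; case: (h \notin _).
Qed.

Theorem proposition4p1 (gT : finGroupType) (H : {group gT}) :
  odd #|H| ->
  gen_nim H =
    (if #|H| == 1 then 0
     else if (dgen H == 1) || (dgen H == 2) then 2
     else 1).
Proof.
move=> oddH.
rewrite /gen_nim /nim nim_fuelE // ?sub0set ?setD0 // /fval gen0 eq_sym trivg_card1.
case: ifP => // n1.
rewrite dgen_le2 ?n1 // cards0 /=.
case: ifP => [/existsP[g /andP[gH e]]|_].
  suff -> : [exists g0 in H, exists h in H, <<h |: [set g0]>>%g == H] by [].
  apply/existsP; exists g; rewrite gH; apply/existsP; exists g; rewrite gH /=.
  by rewrite setUid -(setU0 [set g]).
by rewrite setD0; congr (if _ then _ else _); apply: eq_existsb => g; rewrite setU0.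
Qed.
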